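(* Let $n,m\ge 1$ be integers. If there exist Knowlton-Graham partitions of $\{1,\ldots,n\}$ of order $m$, then $\binom{m+1}{2}\le n\le J(m)$, where $J(m)=\sum_{j=1}^m j\lfloor m/j\rfloor$.
   Context: A pair of Knowlton-Graham partitions of $\{1,\ldots,n\}$ consists of two partitions $A_1,\ldots,A_p$ and $B_1,\ldots,B_q$ of $\{1,\ldots,n\}$ into nonempty pairwise disjoint sets such that, for every pair of positive integers $(j,k)$, at most one element of $\{1,\ldots,n\}$ lies both in some $A_i$ with $|A_i|=j$ and in some $B_l$ with $|B_l|=k$. The order of such a pair is the largest of the cardinalities $|A_1|,\ldots,|A_p|,|B_1|,\ldots,|B_q|$. *)

(* Defs.v *)
From mathcomp Require Import all_boot.
Set Implicit Arguments. Unset Strict Implicit. Unset Printing Implicit Defensive.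

(* The ground set {1,...,n} is modelled by 'I_n = {0,...,n-1}. *)

Definition KG_pair (n : nat) (P Q : {set {set 'I_n}}) : Prop :=
  [/\ partition P [set: 'I_n], partition Q [set: 'I_n] &
      forall j k : nat, forall x y : 'I_n,
        #|pblock P x| = j -> #|pblock Q x| = k ->
        #|pblock P y| = j -> #|pblock Q y| = k -> x = y].

Definition KG_order (n : nat) (P Q : {set {set 'I_n}}) : nat :=
  maxn (\max_(A in P) #|A|) (\max_(B in Q) #|B|).

Definition J (m : nat) : nat := \sum_(1 <= j < m.+1) j * (m %/ j).

(* Main.v *)
Require Import Defs.
From mathcomp Require Import all_boot.
From mathcomp Require Import zify.
Set Implicit Arguments. Unset Strict Implicit.

Lemma count_sum n (f : 'I_n -> nat) N : (forall y, f y < N) ->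
  \sum_(0 <= k < N) #|[set y | f y == k]| = n.
Proof.
move=> hf.
transitivity (\sum_(y : 'I_n) 1); last by rewrite sum1_card card_ord.
symmetry; rewrite (partition_big (fun y => Ordinal (hf y)) xpredT) //= big_mkord.
apply: eq_bigr => k _; rewrite -sum1_card; apply: eq_bigl => y.
by rewrite inE -(inj_eq val_inj).
Qed.

Section Part.
Variables (T : finType) (P : {set {set T}}).
Hypothesis hP : partition P [set: T].

Lemma cov x : x \in cover P.
Proof. by case/and3P: hP => /eqP -> _ _; rewrite inE. Qed.
Lemma blk_mem x : pblock P x \in P.
Proof. exact: pblock_mem (cov x). Qed.
Lemma blk_in x : x \in pblock P x.
Proof. by rewrite mem_pblock cov. Qed.
Lemma blk_def B x : B \in P -> x \in B -> pblock P x = B.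
Proof. by case/and3P: hP => _ tP _; apply: def_pblock. Qed.
Lemma blk_pos x : 0 < #|pblock P x|.
Proof. by apply/card_gt0P; exists x; apply: blk_in. Qed.

Lemma level_dvd k : k %| #|[set y | #|pblock P y| == k]|.
Proof.
set Pk := [set A in P | #|A| == k].
have pk : partition Pk [set y | #|pblock P y| == k].
  case/and3P: hP => _ tP n0.
  apply/and3P; split.
  - apply/eqP/setP => y; rewrite inE; apply/bigcupP/idP.
      case=> A; rewrite inE => /andP [AP /eqP Ak] yA.
      by rewrite (blk_def AP yA) Ak.
    move=> yk; exists (pblock P y); last exact: blk_in.
    by rewrite inE blk_mem.
  - by apply: trivIsetS tP; apply/subsetP => A; rewrite inE => /andP [].
  - by apply: contra n0; rewrite inE => /andP [].
rewrite (@card_uniform_partition _ k _ _ _ pk); first exact: dvdn_mull.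
by move=> A; rewrite inE => /andP [_ /eqP].
Qed.
End Part.

Lemma lower n m' (P Q : {set {set 'I_n}}) : partition P [set: 'I_n] ->
  partition Q [set: 'I_n] ->
  (forall x y, #|pblock P x| = #|pblock P y| -> #|pblock Q x| = #|pblock Q y| -> x = y) ->
  (forall y, #|pblock Q y| <= m'.+1) -> (exists2 A, A \in P & #|A| = m'.+1) ->
  'C(m'.+2, 2) <= n.
Proof.
move=> hP hQ inj bm [A AP Am].
pose g (y : 'I_n) : 'I_m'.+1 := inord (#|pblock Q y|).-1.
have ginj : {in A &, injective g}.
  move=> y z yA zA /(congr1 (@nat_of_ord _)).
  have hy := bm y; have hy' := blk_pos hQ y; have hz := bm z; have hz' := blk_pos hQ z.
  rewrite /g !inordK; [|lia|lia] => e.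
  apply: inj; first by rewrite (blk_def hP AP yA) (blk_def hP AP zA).
  lia.

have gsurj : g @: A = setT.
  by apply/eqP; rewrite eqEcard subsetT card_in_imset // cardsT card_ord Am /=.

have Ek : forall k : 'I_m'.+2, k <= #|[set y | #|pblock Q y| == k]|.
  move=> [[|k] hk] //=.
  have : (Ordinal (hk : k < m'.+1)) \in g @: A by rewrite gsurj inE.
  case/imsetP => y yA /(congr1 (@nat_of_ord _)) /=; rewrite /g inordK; last first.
    by have := bm y; have := blk_pos hQ y; lia.
  move=> ek.
  have byk : #|pblock Q y| = k.+1 by have := blk_pos hQ y; lia.
  rewrite -byk; apply: subset_leq_card; apply/subsetP => z zy.
  rewrite inE; case/and3P: hQ => _ tQ _.
  by rewrite (same_pblock tQ zy).
have mn : m'.+1 <= n by rewrite -Am -[X in _ <= X](card_ord n) max_card.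
rewrite -(@count_sum n (fun y => #|pblock Q y|) n.+1); last first.
  by move=> y; rewrite ltnS -[X in _ <= X](card_ord n) max_card.
rewrite (@big_cat_nat _ _ _ m'.+2) //= -bin2_sum.
apply: leq_trans (leq_addr _ _).
by rewrite !big_mkord; apply: leq_sum => k _; apply: Ek.
Qed.

Lemma upper n m' (P Q : {set {set 'I_n}}) : partition P [set: 'I_n] ->
  partition Q [set: 'I_n] ->
  (forall x y, #|pblock P x| = #|pblock P y| -> #|pblock Q x| = #|pblock Q y| -> x = y) ->
  (forall y, #|pblock P y| <= m'.+1) -> (forall y, #|pblock Q y| <= m'.+1) ->
  n <= \sum_(1 <= j < m'.+2) j * (m'.+1 %/ j).
Proof.
move=> hP hQ inj am bm.
have hr : forall y, #|pblock P y| < m'.+2 by move=> y; rewrite ltnS.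
rewrite -(@count_sum n (fun y => #|pblock P y|) m'.+2 hr).
rewrite big_ltn //=.
have -> : #|[set y | #|pblock P y| == 0]| = 0.
  apply/eqP; rewrite cards_eq0; apply/eqP/setP => y; rewrite !inE.
  by have := blk_pos hP y; case: #|_|.
rewrite add0n !big_add1 /=; apply: leq_sum => k _.

set D := [set y | _ == k.+1].
pose g (y : 'I_n) : 'I_m'.+1 := inord (#|pblock Q y|).-1.
have ginj : {in D &, injective g}.
  move=> y z; rewrite !inE => /eqP yk /eqP zk /(congr1 (@nat_of_ord _)).
  have hy := bm y; have hy' := blk_pos hQ y; have hz := bm z; have hz' := blk_pos hQ z.
  rewrite /g !inordK; [|lia|lia] => e.
  apply: inj; first by rewrite yk zk.
  lia.
have Dm : #|D| <= m'.+1.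
  by rewrite -(card_in_imset ginj) -[X in _ <= X](card_ord m'.+1) max_card.
have := level_dvd hP k.+1; rewrite -/D => /dvdnP [c hc].
rewrite hc mulnC leq_mul2l /= leq_divRL //; by rewrite -hc.
Qed.

Theorem theorem1 (n m : nat) :
  1 <= n -> 1 <= m ->
  (exists P Q : {set {set 'I_n}}, KG_pair P Q /\ KG_order P Q = m) ->
  'C(m.+1, 2) <= n <= J m.
Proof.
case: m => [|m'] // _ _ [P [Q [[hP hQ kg] ord]]].
have inj : forall x y, #|pblock P x| = #|pblock P y| -> #|pblock Q x| = #|pblock Q y| -> x = y.
  by move=> x y e1 e2; apply: (kg _ _ x y erefl erefl).
have inj' : forall x y, #|pblock Q x| = #|pblock Q y| -> #|pblock P x| = #|pblock P y| -> x = y.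
  by move=> x y e1 e2; apply: inj.
move: ord; rewrite /KG_order => ord.
have am : forall y, #|pblock P y| <= m'.+1.
  move=> y; rewrite -ord; apply: leq_trans _ (leq_maxl _ _).
  by apply: leq_bigmax_cond; apply: blk_mem.
have bm : forall y, #|pblock Q y| <= m'.+1.
  move=> y; rewrite -ord; apply: leq_trans _ (leq_maxr _ _).
  by apply: leq_bigmax_cond; apply: blk_mem.
have ex : forall R : {set {set 'I_n}}, \max_(A in R) #|A| = m'.+1 ->
    exists2 A, A \in R & #|A| = m'.+1.
  move=> R hR; case: (posnP #|R|) => h.
    by move: hR; rewrite big_pred0 // => A; rewrite (card0_eq h).
  by case: (eq_bigmax_cond (fun A : {set 'I_n} => #|A|) h) => A AR eA; exists A; rewrite // -eA.
apply/andP; split; last exact: (upper hP hQ inj am bm).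
case: (leqP (\max_(B in Q) #|B|) (\max_(A in P) #|A|)) => h.
  by apply: (lower hP hQ inj bm); apply: ex; rewrite -ord (maxn_idPl h).
apply: (lower hQ hP inj' am); apply: ex; rewrite -ord maxnC (maxn_idPl (ltnW h)) //.
Qed.
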